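(* The tableau calculus $\mathbf{TAB}_{\mathbf{IB}}$ has the termination property: for every tableau of $\mathbf{TAB}_{\mathbf{IB}}$, every branch of it is finite.
   Context: Hybrid language: fix disjoint countably infinite sets $\mathbf{Prop}$ (propositional variables) and $\mathbf{Nom}$ (nominals). Formulas: $\varphi ::= p \mid i \mid \neg\varphi \mid \varphi\land\varphi \mid \Diamond\varphi \mid @_i\varphi$ with $p\in\mathbf{Prop}$, $i\in\mathbf{Nom}$; $\Box\varphi$ abbreviates $\neg\Diamond\neg\varphi$. Tableau calculus $\mathbf{TAB}_{\mathbf{IB}}$. A tableau is a well-founded tree whose nodes are formulas of the form $@_i\varphi$; its root is a formula $@_i\varphi$ (the root formula) where $i$ does not occur in $\varphi$. A branch is a maximal path; $\varphi\in\Theta$ means $\varphi$ occurs on branch $\Theta$. Each branch is extended by applying the rules below to its formulas as often as possible, except that no further formula is added to a branch once either (i) every new formula generated by applying any rule already occurs on the branch, or (ii) the branch is closed, i.e. contains $@_i\varphi$ and $@_i\neg\varphi$ for some formula $\varphi$ and nominal $i$. An accessibility formula is a formula $@_i\Diamond j$ added by rule $[\Diamond]$ (with $j$ the new nominal). Rules (premises already on the branch; conclusions added to it): [$\neg\neg$] from $@_i\neg\neg\varphi$ add $@_i\varphi$; [$\land$] from $@_i(\varphi\land\psi)$ add $@_i\varphi$ and $@_i\psi$; [$\neg\land$] from $@_i\neg(\varphi\land\psi)$ split the branch into one extended by $@_i\neg\varphi$ and one extended by $@_i\neg\psi$; [$\Diamond$] from $@_i\Diamond\varphi$, which is not an accessibility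 formula, add $@_i\Diamond j$ and $@_j\varphi$ where $j$ is a nominal not occurring on the branch; this rule is applied at most once per formula, and only if $i$ is a quasi-urfather on the branch (defined below); [$\neg\Diamond$] from $@_i\neg\Diamond\varphi$ and $@_i\Diamond j$ add $@_j\neg\varphi$; [$\Box_{sym}$] from $@_i\Box\varphi$ and $@_j\Diamond i$ add $@_j\varphi$; [$@$] from $@_i@_j\varphi$ add $@_j\varphi$; [$\neg@$] from $@_i\neg@_j\varphi$ add $@_j\neg\varphi$; [$Id$] from $@_i\varphi$, which is not an accessibility formula, and $@_i j$ add $@_j\varphi$; [$Ref$] for any nominal $i$ occurring on the branch add $@_i i$; ($\mathcal{I}$) for any nominal $i$ occurring on the branch add $@_i\neg\Diamond i$. Auxiliary notions for a branch $\Theta$. $@_i\varphi$ is a quasi-subformula of $@_j\psi$ if $\varphi$ is a subformula of $\psi$, or $\varphi=\neg\chi$ with $\chi$ a subformula of $\psi$. For a nominal $i$ occurring in $\Theta$, $T^\Theta(i)=\{\varphi \mid @_i\varphi\in\Theta$ and $@_i\varphi$ is a quasi-subformula of the root formula$\}$. Nominals $i,j$ are twins in $\Theta$ if $T^\Theta(i)=T^\Theta(j)$. $i\prec_\Theta j$ if $j$ was introduced by applying $[\Diamond]$ to a formula $@_i\Diamond\varphi$ (equivalently, the accessibility formula $@_i\Diamond j$ is in $\Theta$); $\prec_\Theta^*$ is its reflexive transitive closure. A nominal $i$ is a quasi-urfather on $\Theta$ if there are no twins $j\neq k$ with $j\prec_\Theta^* i$ and $k\prec_\Theta^* i$. *)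

(* Defs.v *)
From Stdlib Require Import List Relations.
Import ListNotations.

Inductive form : Type :=
| Pvar : nat -> form
| Nom  : nat -> form
| Neg  : form -> form
| And  : form -> form -> form
| Dia  : form -> form
| At   : nat -> form -> form.

Definition Box (f : form) : form := Neg (Dia (Neg f)).

Fixpoint noms (f : form) : list nat :=
  match f with
  | Pvar _ => []
  | Nom i => [i]
  | Neg g => noms g
  | And g h => noms g ++ noms h
  | Dia g => noms g
  | At i g => i :: noms g
  end.

Inductive subf : form -> form -> Prop :=
| subf_refl : forall f, subf f f
| subf_neg  : forall f g, subf f g -> subf f (Neg g)
| subf_andl : forall f g h, subf f g -> subf f (And g h)
| subf_andr : forall f g h, subf f h -> subf f (And g h)
| subf_dia  : forall f g, subf f g -> subf f (Dia g)
| subf_at   : forall f i g, subf f g -> subf f (At i g).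

(* A tableau formula @_i phi is represented by the pair (i, phi). *)
Definition sat := (nat * form)%type.

(* A node of a branch: the formula @_i phi together with a tag.
   Tag [Some p] means the node is an accessibility formula, added by
   rule [Dia] applied to the premise p; tag [None] means it is not. *)
Definition node := (sat * option sat)%type.

(* A branch (so far): list of nodes, newest first. *)
Definition branch := list node.

Definition onb (B : branch) (s : sat) : Prop := In s (map fst B).

Definition plain (B : branch) (s : sat) : Prop := In (s, None) B.

Definition nom_on (B : branch) (i : nat) : Prop :=
  exists s, onb B s /\ In i (fst s :: noms (snd s)).

Definition closed (B : branch) : Prop :=
  exists i f, onb B (i, f) /\ onb B (i, Neg f).

Definition qsub (phi psi : form) : Prop :=
  subf phi psi \/ exists chi, phi = Neg chi /\ subf chi psi.

Definition Tset (root : sat) (B : branch) (i : nat) (phi : form) : Prop :=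
  onb B (i, phi) /\ qsub phi (snd root).

Definition twins (root : sat) (B : branch) (j k : nat) : Prop :=
  forall phi, Tset root B j phi <-> Tset root B k phi.

Definition prec (B : branch) (i j : nat) : Prop :=
  exists p, In ((i, Dia (Nom j)), Some p) B.

Definition prec_star (B : branch) : nat -> nat -> Prop :=
  clos_refl_trans nat (prec B).

Definition quasi_urfather (root : sat) (B : branch) (i : nat) : Prop :=
  ~ exists j k, j <> k /\ twins root B j k /\ prec_star B j i /\ prec_star B k i.

(* [RuleApp root B out]: applying one rule of TAB_IB to premises on B yields
   the list of nodes [out] (for the branching rule, one of its alternatives). *)
Inductive RuleApp (root : sat) (B : branch) : list node -> Prop :=
| r_negneg : forall i f, onb B (i, Neg (Neg f)) ->
    RuleApp root B [((i, f), None)]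
| r_and : forall i f g, onb B (i, And f g) ->
    RuleApp root B [((i, f), None); ((i, g), None)]
| r_nand_l : forall i f g, onb B (i, Neg (And f g)) ->
    RuleApp root B [((i, Neg f), None)]
| r_nand_r : forall i f g, onb B (i, Neg (And f g)) ->
    RuleApp root B [((i, Neg g), None)]
| r_dia : forall i f j,
    plain B (i, Dia f) ->
    ~ (exists s, In (s, Some (i, Dia f)) B) ->     (* applied at most once per formula *)
    quasi_urfather root B i ->
    ~ nom_on B j ->
    RuleApp root B [((i, Dia (Nom j)), Some (i, Dia f)); ((j, f), None)]
| r_ndia : forall i f j, onb B (i, Neg (Dia f)) -> onb B (i, Dia (Nom j)) ->
    RuleApp root B [((j, Neg f), None)]
| r_boxsym : forall i f j, onb B (i, Box f) -> onb B (j, Dia (Nom i)) ->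
    RuleApp root B [((j, f), None)]
| r_at : forall i j f, onb B (i, At j f) ->
    RuleApp root B [((j, f), None)]
| r_nat : forall i j f, onb B (i, Neg (At j f)) ->
    RuleApp root B [((j, Neg f), None)]
| r_id : forall i f j, plain B (i, f) -> onb B (i, Nom j) ->
    RuleApp root B [((j, f), None)]
| r_ref : forall i, nom_on B i ->
    RuleApp root B [((i, Nom i), None)]
| r_irr : forall i, nom_on B i ->
    RuleApp root B [((i, Neg (Dia (Nom i))), None)].

Definition Step (root : sat) (B B' : branch) : Prop :=
  ~ closed B /\
  exists out new,
    RuleApp root B out /\
    (forall n, In n new <-> (In n out /\ ~ onb B (fst n))) /\
    new <> [] /\
    B' = new ++ B.

(* A branch of a tableau with root formula @_i phi is a sequence of steps
   starting from the one-node branch [@_i phi]. *)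
Definition root_branch (root : sat) : branch := [(root, None)].

(* Main.v *)
Require Import Defs.
From Stdlib Require Import List Relations Arith Lia Classical.
Import ListNotations.

Definition form_eq_dec : forall x y : form, {x = y} + {x <> y}.
Proof. decide equality; apply Nat.eq_dec. Defined.
Definition sat_eq_dec : forall x y : sat, {x = y} + {x <> y}.
Proof. decide equality; [apply form_eq_dec | apply Nat.eq_dec]. Defined.
Definition code_eq_dec : forall x y : (nat * list form), {x = y} + {x <> y}.
Proof. decide equality; [apply (list_eq_dec form_eq_dec) | apply Nat.eq_dec]. Defined.

Lemma subf_trans : forall a b c, subf a b -> subf b c -> subf a c.
Proof. intros a b c H1 H2; induction H2; eauto using subf. Qed.

Fixpoint subs (f : form) : list form :=
  f :: match f with
  | Pvar _ | Nom _ => []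
  | Neg g | Dia g | At _ g => subs g
  | And g h => subs g ++ subs h
  end.

Lemma subs_complete : forall g f, subf g f -> In g (subs f).
Proof.
  intros g f H; induction H; [destruct f; simpl; auto|..]; simpl; right; try apply in_or_app; auto.
Qed.

Definition Qlist (phi : form) := subs phi ++ map Neg (subs phi).

Lemma qsub_Q : forall g phi, qsub g phi -> In g (Qlist phi).
Proof.
  intros g phi [H|[chi [-> H]]]; unfold Qlist; apply in_or_app;
  [left; now apply subs_complete | right; apply in_map; now apply subs_complete].
Qed.

Lemma qsub_neg_inv : forall g phi, qsub (Neg g) phi -> subf g phi.
Proof.
  intros g phi [H|[chi [E H]]].
  - eapply subf_trans; [|exact H]. repeat constructor.
  - injection E as ->. exact H.
Qed.

Lemma qsub_nonneg : forall g phi, qsub g phi -> (forall chi, g <> Neg chi) -> subf g phi.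
Proof. intros g phi [H|[chi [E H]]] N; [exact H| exfalso; eapply N; eauto]. Qed.

Definition plainShape (phi g : form) : Prop :=
  qsub g phi \/ exists k, g = Nom k \/ g = Neg (Nom k) \/ g = Neg (Dia (Nom k)).
Definition goodShape (phi g : form) : Prop :=
  plainShape phi g \/ exists k, g = Dia (Nom k).

Fixpoint lists_upto {A} (l : list A) (n : nat) : list (list A) :=
  match n with
  | 0 => [[]]
  | S n => [] :: flat_map (fun a => map (cons a) (lists_upto l n)) l
  end.

Lemma lists_upto_in : forall A (l : list A) n c, length c <= n -> incl c l -> In c (lists_upto l n).
Proof.
  intros A l n; induction n; intros c Hc Hi.
  - destruct c; simpl in *; [auto|lia].
  - destruct c as [|a c]; simpl; [auto|]. right. apply in_flat_map.
    exists a; split; [apply Hi; simpl; auto|]. apply in_map. apply IHn.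
    simpl in Hc; lia. intros x Hx; apply Hi; simpl; auto.
Qed.

Fixpoint blists (n : nat) : list (list bool) :=
  match n with
  | 0 => [[]]
  | S n => map (cons true) (blists n) ++ map (cons false) (blists n)
  end.

Lemma blists_len : forall n, length (blists n) = 2 ^ n.
Proof. induction n; simpl; auto. rewrite length_app, !length_map; lia. Qed.

Lemma blists_in : forall v, In v (blists (length v)).
Proof.
  induction v as [|b v IH]; simpl; auto. apply in_or_app. destruct b; [left|right]; apply in_map; auto.
Qed.

Lemma count_rel : forall (A B : Type) (decB : forall x y : B, {x = y} + {x <> y})
  (Rel : A -> B -> Prop) (l : list A) (V : list B),
  NoDup l -> (forall a, In a l -> exists b, In b V /\ Rel a b) ->
  (forall a a' b, Rel a b -> Rel a' b -> a = a') -> length l <= length V.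
Proof.
  intros A B decB Rel l; induction l as [|a l IH]; intros V Hnd Hex Hinj; simpl; [lia|].
  inversion Hnd; subst.
  destruct (Hex a (or_introl eq_refl)) as [b [Hb Rb]].
  assert (length l <= length (remove decB b V)).
  { apply IH; auto. intros a' Ha'. destruct (Hex a' (or_intror Ha')) as [b' [Hb' Rb']].
    exists b'; split; auto. apply in_in_remove; auto. intros ->.
    assert (a' = a) by (eapply Hinj; eauto). subst; contradiction. }
  pose proof (remove_length_lt decB V b Hb). lia.
Qed.

Lemma pigeon : forall (B : Type) (h : nat -> B) (V : list B) n,
  (forall k, k <= n -> In (h k) V) -> length V <= n ->
  exists k l, k <= n /\ l <= n /\ k <> l /\ h k = h l.
Proof.
  intros B h V n Hin Hlen.
  destruct (classic (exists k l, k <= n /\ l <= n /\ k <> l /\ h k = h l)) as [H|H]; auto.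
  exfalso.
  assert (ND : NoDup (map h (seq 0 (S n)))).
  { apply (NoDup_nth _ (h 0)). intros i j Hi Hj E. rewrite length_map, length_seq in Hi, Hj.
    rewrite (map_nth h (seq 0 (S n)) 0 i), (map_nth h (seq 0 (S n)) 0 j), !seq_nth in E by auto.
    simpl in E. destruct (Nat.eq_dec i j); auto. exfalso; apply H. exists i, j; repeat split; auto; lia. }
  pose proof (@NoDup_incl_length _ _ V ND) as L.
  assert (incl (map h (seq 0 (S n))) V).
  { intros x Hx. apply in_map_iff in Hx. destruct Hx as [k [<- Hk]]. apply in_seq in Hk. apply Hin; lia. }
  specialize (L H0). rewrite length_map, length_seq in L. lia.
Qed.
From Stdlib Require Import IndefiniteDescription.
Definition Rn (r : nat) (phi : form) := r :: noms phi.
Definition Kb (phi : form) := 2 ^ length (Qlist phi).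

Inductive Code (r : nat) (phi : form) (B : branch) : nat -> nat -> list form -> Prop :=
| code_root : forall z, In z (Rn r phi) -> Code r phi B z z []
| code_step : forall y x z f c, In ((y, Dia (Nom x)), Some (y, Dia f)) B -> In f (subs phi) ->
    Code r phi B y z c -> Code r phi B x z (f :: c).

Record Inv (r : nat) (phi : form) (B : branch) : Prop := {
  iS1 : forall s, In (s, None) B -> plainShape phi (snd s);
  iS2 : forall s p, In (s, Some p) B -> exists y x f, s = (y, Dia (Nom x)) /\ p = (y, Dia f) /\ In f (subs phi);
  iN0 : forall x, In x (Rn r phi) -> nom_on B x;
  iU1 : forall y x p, In ((y, Dia (Nom x)), Some p) B -> ~ In x (Rn r phi);
  iU2 : forall y x p y' p', In ((y, Dia (Nom x)), Some p) B -> In ((y', Dia (Nom x)), Some p') B -> y = y' /\ p = p';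
  iU3 : forall s s' p, In (s, Some p) B -> In (s', Some p) B -> s = s';
  iC : forall x, nom_on B x -> exists z c, Code r phi B x z c /\ length c <= Kb phi
}.

Lemma code_mono : forall r phi B B', incl B B' -> forall x z c, Code r phi B x z c -> Code r phi B' x z c.
Proof. intros r phi B B' Hi x z c H; induction H; econstructor; eauto. Qed.

Lemma code_in : forall r phi B x z c, Code r phi B x z c -> In z (Rn r phi) /\ incl c (subs phi).
Proof.
  intros r phi B x z c H; induction H; split; try tauto; [intros a []|].
  intros a [->|Ha]; auto. apply IHCode; auto.
Qed.

Lemma code_fun : forall r phi B, Inv r phi B -> forall x z c, Code r phi B x z c ->
  forall z' c', Code r phi B x z' c' -> c = c'.
Proof.
  intros r phi B I x z c H; induction H; intros z' c' H'; inversion H'; subst; auto.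
  - exfalso. eapply (iU1 _ _ _ I); eassumption.
  - exfalso. eapply (iU1 _ _ _ I); eassumption.
  - destruct (iU2 _ _ _ I _ _ _ _ _ H H2) as [<- E]. injection E as <-.
    f_equal. eapply IHCode; eauto.
Qed.

Lemma code_inj : forall r phi B, Inv r phi B -> forall c x x' z, Code r phi B x z c -> Code r phi B x' z c -> x = x'.
Proof.
  intros r phi B I c; induction c as [|f c IH]; intros x x' z H H'; inversion H; inversion H'; subst; auto.
  match goal with
  | A1 : In ((?y1, Dia (Nom x)), Some (?y1, Dia f)) B, A2 : In ((?y2, Dia (Nom x')), Some (?y2, Dia f)) B,
    C1 : Code _ _ _ ?y1 z c, C2 : Code _ _ _ ?y2 z c |- _ =>
    assert (y1 = y2) by (eapply IH; eauto); subst;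
    pose proof (iU3 _ _ _ I _ _ _ A1 A2) as E; congruence
  end.
Qed.

Lemma code_anc : forall r phi B x z c, Code r phi B x z c ->
  forall k, k <= length c -> exists y, Code r phi B y z (skipn k c) /\ prec_star B y x.
Proof.
  intros r phi B x z c H; induction H; intros k Hk.
  - simpl in Hk. assert (k = 0) by lia. subst. exists z; split; [constructor; auto| apply rt_refl].
  - destruct k as [|k].
    + exists x; split; [econstructor; eauto| apply rt_refl].
    + simpl in Hk. destruct (IHCode k ltac:(lia)) as [w [Hw Hp]]. exists w; split; auto.
      eapply rt_trans; [exact Hp|]. apply rt_step. exists (y, Dia f); auto.
Qed.

Lemma map_eq_in : forall A B (f g : A -> B) l, map f l = map g l -> forall a, In a l -> f a = g a.
Proof.
  intros A B f g l; induction l; simpl; intros E a' Ha; [contradiction|].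
  injection E as E1 E2. destruct Ha as [<-|Ha]; auto.
Qed.

Lemma key : forall r phi B, Inv r phi B -> forall i z c, Code r phi B i z c -> Kb phi <= length c ->
  ~ quasi_urfather (r, phi) B i.
Proof.
  intros r phi B I i z c Hc Hl Hq.
  assert (Ex : forall k, exists y, k <= length c -> Code r phi B y z (skipn k c) /\ prec_star B y i).
  { intros k. destruct (le_lt_dec k (length c)) as [h|h].
    - destruct (code_anc _ _ _ _ _ _ Hc k h) as [y Hy]. exists y; auto.
    - exists 0; intros; lia. }
  destruct (functional_choice _ Ex) as [g Hg].
  set (vec := fun k => map (fun q => if in_dec sat_eq_dec (g k, q) (map fst B) then true else false) (Qlist phi)).
  destruct (pigeon _ vec (blists (length (Qlist phi))) (Kb phi)) as [k [l [Hk [Hl' [Hkl E]]]]].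
  - intros k _. replace (length (Qlist phi)) with (length (vec k)) by (unfold vec; apply length_map).
    apply blists_in.
  - rewrite blists_len. unfold Kb; lia.
  - apply Hq. exists (g k), (g l).
    destruct (Hg k ltac:(lia)) as [Ck Pk]. destruct (Hg l ltac:(lia)) as [Cl Pl].
    split; [|split; [|split; auto]].
    + intros Eg. rewrite Eg in Ck. pose proof (code_fun _ _ _ I _ _ _ Ck _ _ Cl) as Es.
      apply (f_equal (@length _)) in Es. rewrite !length_skipn in Es. lia.
    + intros phi0; split; intros [Ho Hs]; split; auto; simpl in Hs; pose proof (map_eq_in _ _ _ _ _ E _ (qsub_Q _ _ Hs)) as Eq.
      simpl in Eq. destruct (in_dec sat_eq_dec (g k, phi0) (map fst B)); [|contradiction].
      destruct (in_dec sat_eq_dec (g l, phi0) (map fst B)); [auto|discriminate].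
      simpl in Eq. destruct (in_dec sat_eq_dec (g l, phi0) (map fst B)); [|contradiction].
      destruct (in_dec sat_eq_dec (g k, phi0) (map fst B)); [auto|discriminate].
Qed.

Lemma nom_on_mono : forall B B' x, incl B B' -> nom_on B x -> nom_on B' x.
Proof.
  intros B B' x Hi [s [Hs Hx]]. exists s; split; auto. unfold onb in *.
  apply in_map_iff in Hs. destruct Hs as [n [<- Hn]]. apply in_map; auto.
Qed.

Lemma onb_node : forall B s, onb B s -> exists t, In (s, t) B.
Proof.
  intros B s H. apply in_map_iff in H. destruct H as [[s' t] [E H]]. simpl in E; subst. eauto.
Qed.

Lemma good_onb : forall r phi B, Inv r phi B -> forall x g, onb B (x, g) -> goodShape phi g.
Proof.
  intros r phi B I x g H. destruct (onb_node _ _ H) as [[p|] Hn].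
  - destruct (iS2 _ _ _ I _ _ Hn) as [y [x' [f [E _]]]]. injection E as -> ->. right; eauto.
  - left. apply (iS1 _ _ _ I _ Hn).
Qed.

Lemma nom_of : forall B y g x, onb B (y, g) -> In x (y :: noms g) -> nom_on B x.
Proof. intros B y g x H1 H2. exists (y, g); auto. Qed.

Lemma plain_onb : forall B s, plain B s -> onb B s.
Proof. intros B s H. unfold onb. apply (in_map fst) in H. exact H. Qed.

Definition out_dia (r : nat) (phi : form) (B : branch) (out : list node) : Prop :=
  exists i f j, plain B (i, Dia f) /\ ~ (exists s, In (s, Some (i, Dia f)) B) /\
    quasi_urfather (r, phi) B i /\ ~ nom_on B j /\
    out = [((i, Dia (Nom j)), Some (i, Dia f)); ((j, f), None)].

Definition out_plain (phi : form) (B : branch) (out : list node) : Prop :=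
  (forall s p, ~ In (s, Some p) out) /\ (forall s, In (s, None) out -> plainShape phi (snd s)) /\
  (forall n x, In n out -> In x (fst (fst n) :: noms (snd (fst n))) -> nom_on B x).

Ltac sub_down := eapply subf_trans; [|eassumption]; eauto 4 using subf.

Lemma op_single : forall phi B y g, plainShape phi g -> (forall x, In x (y :: noms g) -> nom_on B x) ->
  out_plain phi B [((y, g), None)].
Proof.
  intros phi B y g Hs Hn. split; [|split].
  - intros s p [E|[]]; discriminate.
  - intros s [E|[]]. injection E as <-. exact Hs.
  - intros n x [<-|[]] Hx. apply Hn; exact Hx.
Qed.

Lemma op_pair : forall phi B y g h, plainShape phi g -> plainShape phi h ->
  (forall x, In x (y :: noms g) -> nom_on B x) -> (forall x, In x (y :: noms h) -> nom_on B x) ->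
  out_plain phi B [((y, g), None); ((y, h), None)].
Proof.
  intros phi B y g h Hs Hs' Hn Hn'. split; [|split].
  - intros s p [E|[E|[]]]; discriminate.
  - intros s [E|[E|[]]]; injection E as <-; assumption.
  - intros n x [<-|[<-|[]]] Hx; auto.
Qed.

Ltac shp I Ho := let G := fresh "G" in pose proof (good_onb _ _ _ I _ _ Ho) as G;
  let Hqs := fresh "Hqs" in let k := fresh "k" in let E := fresh "E" in
  destruct G as [[Hqs|[k [E|[E|E]]]]|[k E]]; try discriminate.

Ltac nomt Ho := intros ?x ?Hx; eapply nom_of; [exact Ho|]; simpl in *;
  repeat rewrite in_app_iff in *; tauto.

Lemma rule_cases : forall r phi B out, Inv r phi B -> RuleApp (r, phi) B out ->
  out_dia r phi B out \/ out_plain phi B out.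
Proof.
  intros r phi B out I H.
  destruct H as [i f Ho|i f g Ho|i f g Ho|i f g Ho|i f j Hp Hn Hq Hj|i f j Ho Ho2|i f j Ho Ho2
                |i j f Ho|i j f Ho|i f j Hp Ho|i Ho|i Ho].
  - right. apply op_single; [|nomt Ho]. shp I Ho.
    left; left. apply qsub_neg_inv in Hqs. sub_down.
  - right. shp I Ho. apply qsub_nonneg in Hqs; [|intros ? ?; discriminate].
    apply op_pair; try nomt Ho; left; left; sub_down.
  - right. apply op_single; [|nomt Ho]. shp I Ho.
    left; right. apply qsub_neg_inv in Hqs. exists f; split; auto. sub_down.
  - right. apply op_single; [|nomt Ho]. shp I Ho.
    left; right. apply qsub_neg_inv in Hqs. exists g; split; auto. sub_down.
  - left. exists i, f, j; auto.
  - right. apply op_single.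
    + shp I Ho.
      * left; right. apply qsub_neg_inv in Hqs. exists f; split; auto. sub_down.
      * injection E as ->. right. exists k; auto.
    + intros x [<-|Hx].
      * eapply nom_of; [exact Ho2|]. simpl; auto.
      * eapply nom_of; [exact Ho|]. simpl; auto.
  - right. apply op_single.
    + unfold Box in Ho. shp I Ho. left; left. apply qsub_neg_inv in Hqs. sub_down.
    + intros x [<-|Hx].
      * eapply nom_of; [exact Ho2|]. simpl; auto.
      * eapply nom_of; [exact Ho|]. simpl; auto.
  - right. apply op_single; [|nomt Ho]. shp I Ho.
    apply qsub_nonneg in Hqs; [|intros ? ?; discriminate]. left; left; sub_down.
  - right. apply op_single; [|nomt Ho]. shp I Ho.
    left; right. apply qsub_neg_inv in Hqs. exists f; split; auto. sub_down.
  - right. apply op_single.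
    + apply (iS1 _ _ _ I _ Hp).
    + intros x [<-|Hx].
      * eapply nom_of; [exact Ho|]. simpl; auto.
      * eapply nom_of; [exact (plain_onb _ _ Hp)|]. simpl; auto.
  - right. apply op_single; [right; exists i; auto|]. intros x [<-|[<-|[]]];
    destruct Ho as [s [Hs Hx]]; exists s; auto.
  - right. apply op_single; [right; exists i; auto|]. intros x [<-|[<-|[]]];
    destruct Ho as [s [Hs Hx]]; exists s; auto.
Qed.

Lemma Inv_init : forall r phi, Inv r phi (root_branch (r, phi)).
Proof.
  intros r phi. unfold root_branch. constructor.
  - intros s [E|[]]. injection E as <-. left; left; constructor.
  - intros s p [E|[]]; discriminate.
  - intros x Hx. exists (r, phi); split; [left; auto|exact Hx].
  - intros y x p [E|[]]; discriminate.
  - intros y x p y' p' [E|[]]; discriminate.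
  - intros s s' p [E|[]]; discriminate.
  - intros x [s [[<-|[]] Hx]]. exists x, []; split; [constructor; exact Hx|simpl; lia].
Qed.

Lemma nom_on_app : forall nw B x, nom_on (nw ++ B) x ->
  (exists n, In n nw /\ In x (fst (fst n) :: noms (snd (fst n)))) \/ nom_on B x.
Proof.
  intros nw B x [s [Hs Hx]]. unfold onb in Hs. rewrite map_app, in_app_iff in Hs.
  destruct Hs as [Hs|Hs].
  - left. apply in_map_iff in Hs. destruct Hs as [n [<- Hn]]. eauto.
  - right. exists s; auto.
Qed.

Lemma incl_app_r : forall (A : Type) (l m : list A), incl m (l ++ m).
Proof. intros A l m a H; apply in_or_app; auto. Qed.

Lemma Inv_step : forall r phi B B', Inv r phi B -> Step (r, phi) B B' -> Inv r phi B'.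
Proof.
  intros r phi B B' I [_ [out [nw [Hr [Hnw [Hne ->]]]]]].
  assert (Hinc : incl B (nw ++ B)) by apply incl_app_r.
  destruct (rule_cases _ _ _ _ I Hr) as [[i [f [j [Hp [Hn [Hq [Hj ->]]]]]]]|[O1 [O2 O3]]].
  -
    assert (Hnw' : forall n, In n nw -> n = ((i, Dia (Nom j)), Some (i, Dia f)) \/ n = ((j, f), None)).
    { intros n H. apply Hnw in H. destruct H as [[<-|[<-|[]]] _]; auto. }
    assert (HA : In ((i, Dia (Nom j)), Some (i, Dia f)) nw).
    { apply Hnw. split; [left; auto|]. intros H. apply Hj. eapply nom_of; [exact H|]. simpl; auto. }
    assert (Hsub : subf f phi).
    { destruct (iS1 _ _ _ I _ Hp) as [Hqs|[k [E|[E|E]]]]; try discriminate.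
      apply qsub_nonneg in Hqs; [|intros ? ?; discriminate]. sub_down. }
    assert (HjR : ~ In j (Rn r phi)) by (intros H; apply Hj; apply (iN0 _ _ _ I _ H)).
    assert (Hacc : forall y p, ~ In ((y, Dia (Nom j)), Some p) B).
    { intros y p H. apply Hj. eapply nom_of; [apply in_map with (f := fst) in H; exact H|]. simpl; auto. }
    constructor.
    + intros s H. apply in_app_iff in H. destruct H as [H|H]; [|apply (iS1 _ _ _ I _ H)].
      destruct (Hnw' _ H) as [E|E]; injection E; intros; subst; try discriminate.
      left; left; exact Hsub.
    + intros s p H. apply in_app_iff in H. destruct H as [H|H]; [|apply (iS2 _ _ _ I _ _ H)].
      destruct (Hnw' _ H) as [E|E]; injection E; intros; subst; try discriminate.
      exists i, j, f; repeat split. apply subs_complete; auto.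
    + intros x H. apply (nom_on_mono B); auto. apply (iN0 _ _ _ I _ H).
    + intros y x p H. apply in_app_iff in H. destruct H as [H|H]; [|apply (iU1 _ _ _ I _ _ _ H)].
      destruct (Hnw' _ H) as [E|E]; injection E; intros; subst; try discriminate. auto.
    + intros y x p y' p' H H'. apply in_app_iff in H, H'.
      destruct H as [H|H]; destruct H' as [H'|H'].
      * destruct (Hnw' _ H) as [E|E]; injection E; intros; subst; try discriminate.
        destruct (Hnw' _ H') as [E'|E']; injection E'; intros; subst; try discriminate. auto.
      * destruct (Hnw' _ H) as [E|E]; injection E; intros; subst; try discriminate.
        exfalso; eapply Hacc; eauto.
      * destruct (Hnw' _ H') as [E|E]; injection E; intros; subst; try discriminate.
        exfalso; eapply Hacc; eauto.
      * apply (iU2 _ _ _ I _ _ _ _ _ H H').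
    + intros s s' p H H'. apply in_app_iff in H, H'.
      destruct H as [H|H]; destruct H' as [H'|H'].
      * destruct (Hnw' _ H) as [E|E]; injection E; intros; subst; try discriminate.
        destruct (Hnw' _ H') as [E'|E']; injection E'; intros; subst; try discriminate. auto.
      * destruct (Hnw' _ H) as [E|E]; injection E; intros; subst; try discriminate.
        exfalso; apply Hn; eauto.
      * destruct (Hnw' _ H') as [E|E]; injection E; intros; subst; try discriminate.
        exfalso; apply Hn; eauto.
      * apply (iU3 _ _ _ I _ _ _ H H').
    + assert (Hi : nom_on B i) by (eapply nom_of; [exact (plain_onb _ _ Hp)|]; simpl; auto).
      assert (Hjc : exists z c, Code r phi (nw ++ B) j z c /\ length c <= Kb phi).
      { destruct (iC _ _ _ I _ Hi) as [z [c [Hc Hl]]].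
        destruct (le_lt_dec (Kb phi) (length c)) as [h|h].
        - exfalso. exact (key _ _ _ I _ _ _ Hc h Hq).
        - exists z, (f :: c); split; [|simpl; lia].
          econstructor; [apply in_or_app; left; exact HA| apply subs_complete; auto|].
          eapply code_mono; [exact Hinc|exact Hc]. }
      intros x H. destruct (nom_on_app _ _ _ H) as [[n [Hn1 Hx]]|Hx].
      * destruct (Hnw' _ Hn1) as [ -> | -> ]; simpl in Hx.
        -- destruct Hx as [<-|[<-|[]]]; auto.
           destruct (iC _ _ _ I _ Hi) as [z [c [Hc Hl]]]. exists z, c; split; auto.
           eapply code_mono; eauto.
        -- destruct Hx as [<-|Hx]; auto.
           assert (nom_on B x) by (eapply nom_of; [exact (plain_onb _ _ Hp)|]; simpl; auto).
           destruct (iC _ _ _ I _ H0) as [z [c [Hc Hl]]]. exists z, c; split; auto.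
           eapply code_mono; eauto.
      * destruct (iC _ _ _ I _ Hx) as [z [c [Hc Hl]]]. exists z, c; split; auto.
        eapply code_mono; eauto.
  -
    assert (Hnw' : forall n, In n nw -> In n out) by (intros n H; apply Hnw in H; tauto).
    constructor.
    + intros s H. apply in_app_iff in H. destruct H as [H|H]; [|apply (iS1 _ _ _ I _ H)].
      apply O2, Hnw'; auto.
    + intros s p H. apply in_app_iff in H. destruct H as [H|H]; [|apply (iS2 _ _ _ I _ _ H)].
      exfalso; eapply O1, Hnw'; eauto.
    + intros x H. apply (nom_on_mono B); auto. apply (iN0 _ _ _ I _ H).
    + intros y x p H. apply in_app_iff in H. destruct H as [H|H]; [|apply (iU1 _ _ _ I _ _ _ H)].
      exfalso; eapply O1, Hnw'; eauto.
    + intros y x p y' p' H H'. apply in_app_iff in H, H'.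
      destruct H as [H|H]; [exfalso; eapply O1, Hnw'; eauto|].
      destruct H' as [H'|H']; [exfalso; eapply O1, Hnw'; eauto|].
      apply (iU2 _ _ _ I _ _ _ _ _ H H').
    + intros s s' p H H'. apply in_app_iff in H, H'.
      destruct H as [H|H]; [exfalso; eapply O1, Hnw'; eauto|].
      destruct H' as [H'|H']; [exfalso; eapply O1, Hnw'; eauto|].
      apply (iU3 _ _ _ I _ _ _ H H').
    + intros x H. assert (Hx : nom_on B x).
      { destruct (nom_on_app _ _ _ H) as [[n [Hn1 Hx]]|Hx]; auto. eapply O3; eauto. }
      destruct (iC _ _ _ I _ Hx) as [z [c [Hc Hl]]]. exists z, c; split; auto.
      eapply code_mono; eauto.
Qed.

Definition allnoms (B : branch) : list nat :=
  flat_map (fun n => fst (fst n) :: noms (snd (fst n))) B.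

Lemma nom_on_allnoms : forall B x, nom_on B x -> In x (allnoms B).
Proof.
  intros B x [s [Hs Hx]]. apply in_map_iff in Hs. destruct Hs as [n [<- Hn]].
  apply in_flat_map. eauto.
Qed.

Lemma allnoms_nom_on : forall B x, In x (allnoms B) -> nom_on B x.
Proof.
  intros B x H. apply in_flat_map in H. destruct H as [n [Hn Hx]].
  exists (fst n); split; auto. apply in_map; auto.
Qed.

Definition Codes (r : nat) (phi : form) := list_prod (Rn r phi) (lists_upto (subs phi) (Kb phi)).
Definition Nset (B : branch) := nodup Nat.eq_dec (allnoms B).

Lemma nset_bound : forall r phi B, Inv r phi B -> length (Nset B) <= length (Codes r phi).
Proof.
  intros r phi B I.
  apply (count_rel _ _ code_eq_dec (fun x zc => Code r phi B x (fst zc) (snd zc))).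
  - apply NoDup_nodup.
  - intros x Hx. apply nodup_In, allnoms_nom_on in Hx.
    destruct (iC _ _ _ I _ Hx) as [z [c [Hc Hl]]]. exists (z, c); split; auto.
    destruct (code_in _ _ _ _ _ _ Hc). apply in_prod; auto. apply lists_upto_in; auto.
  - intros a a' [z c] H1 H2. simpl in *. eapply code_inj; eauto.
Qed.

Definition Fl (phi : form) (Ns : list nat) : list form :=
  Qlist phi ++ map Nom Ns ++ map (fun k => Neg (Nom k)) Ns ++ map (fun k => Dia (Nom k)) Ns
  ++ map (fun k => Neg (Dia (Nom k))) Ns.

Definition Sset (B : branch) := nodup sat_eq_dec (map fst B).

Lemma sset_bound : forall r phi B, Inv r phi B -> length (Sset B) <= length (Nset B) * length (Fl phi (Nset B)).
Proof.
  intros r phi B I. rewrite <- length_prod. apply NoDup_incl_length; [apply NoDup_nodup|].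
  intros [x g] H. apply nodup_In in H.
  assert (Hk : forall k, In k (x :: noms g) -> In k (Nset B)).
  { intros k Hk. apply nodup_In, nom_on_allnoms. eapply nom_of; eauto. }
  apply in_prod; [apply Hk; left; auto|].
  unfold Fl. rewrite !in_app_iff.
  destruct (good_onb _ _ _ I _ _ H) as [[Hqs|[k [E|[E|E]]]]|[k E]]; subst.
  - left. apply qsub_Q; auto.
  - right; left. apply in_map. apply Hk; simpl; auto.
  - right; right; left. apply in_map_iff. exists k; split; auto. apply Hk; simpl; auto.
  - right; right; right; right. apply in_map_iff. exists k; split; auto. apply Hk; simpl; auto.
  - right; right; right; left. apply in_map_iff. exists k; split; auto. apply Hk; simpl; auto.
Qed.

Lemma step_grow : forall root B B', Step root B B' -> S (length (Sset B)) <= length (Sset B').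
Proof.
  intros root B B' [_ [out [nw [_ [Hnw [Hne ->]]]]]].
  destruct nw as [|n0 nw]; [contradiction|].
  destruct (proj1 (Hnw n0) (or_introl eq_refl)) as [_ Hn0].
  change (S (length (Sset B))) with (length (fst n0 :: Sset B)).
  apply NoDup_incl_length.
  - constructor; [|apply NoDup_nodup]. intros H. apply nodup_In in H. contradiction.
  - intros s [<-|Hs]; apply nodup_In.
    + left; auto.
    + apply nodup_In in Hs. simpl. right. rewrite map_app. apply in_or_app; auto.
Qed.

Theorem theorem3 :
  forall (i : nat) (phi : form),
    ~ In i (noms phi) ->
    forall b : nat -> branch,
      b 0 = root_branch (i, phi) ->
      ~ (forall n, Step (i, phi) (b n) (b (S n))).
Proof.
  intros i phi _ b H0 Hs.
  assert (I : forall n, Inv i phi (b n)).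
  { induction n; [rewrite H0; apply Inv_init|]. eapply Inv_step; eauto. }
  assert (G : forall n, n <= length (Sset (b n))).
  { induction n; [lia|]. pose proof (step_grow _ _ _ (Hs n)). lia. }
  set (C := length (Codes i phi)).
  set (M := C * (length (Qlist phi) + 4 * C)).
  assert (Hb : forall n, length (Sset (b n)) <= M).
  { intros n. eapply Nat.le_trans; [apply (sset_bound _ _ _ (I n))|].
    pose proof (nset_bound _ _ _ (I n)) as Hn. fold C in Hn.
    unfold Fl. rewrite !length_app, !length_map. unfold M.
    set (N := length (Nset (b n))) in *. set (Q := length (Qlist phi)).
    assert (N * (Q + (N + (N + (N + N)))) <= C * (Q + 4 * C)); [|lia].
    apply Nat.mul_le_mono; lia. }
  specialize (G (S M)). specialize (Hb (S M)). lia.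
Qed.
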